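(* Let $p$ be a prime and $G$ a finite Abelian $p$-group. Given two chains of subgroups of $G$ with the same ends, $L=G_e<G_{e-1}<\dots<G_0=G'$ and $L=H_e<H_{e-1}<\dots<H_0=G'$, each with consecutive indices $p$, we have $$\sum_{j=1}^{e}p^{e-j}B_{G_{j-1},G_j}-\sum_{j=1}^{e}p^{e-j}B_{H_{j-1},H_j}\in K'(G,C_p).$$
   Context: $\Gamma=G\times C_p$, $B(\Gamma)$ its Burnside ring (free on subgroups); $\epsilon$ is the trivial homomorphism, $X\times\epsilon=X\times\{1\}$; for $K\le G$, $\rho:K\to C_p$, $K\times\rho=\{(k,\rho(k))\}$. Type 2 element for $L<G'\le G$ with $G'/L\cong C_p$: $B_{G',L}=L\times\epsilon-\sum_{\tilde\beta}G'\times\tilde\beta-L\times C_p+p\,(G'\times C_p)$, $\tilde\beta$ over homomorphisms $G'\to C_p$ trivial on $L$. $K(\Pi)$ denotes Brauer relations of $\Pi$ (kernel of $B(\Pi)\to R_{\mathbb Q}(\Pi)$, $[X]\mapsto[\mathbb Q[X]]$); $B(G,C_p)$ is the span of graphs; $K(G,C_p)=K(\Gamma)\cap B(G,C_p)$. For $N\le K\le\Gamma$, $\mathrm{Ind}_K^\Gamma\mathrm{Inf}_{K/N}^K$ sends $S/N\mapsto S$. $K'(G,C_p)$ is the submodule of $K(G,C_p)$ generated by elements of $K(G,C_p)$ of the form $\mathrm{Ind}_K^\Gamma\mathrm{Inf}_{K/N}^K(\Theta')$ with $K/N\cong C_p^3$, $\Theta'\in K(K/N)$. *)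

(* Defs.v *)
From HB Require Import structures.
From mathcomp Require Import all_boot all_order all_algebra all_fingroup all_solvable all_field all_character.
Set Implicit Arguments. Unset Strict Implicit. Unset Printing Implicit Defensive.
Import GRing.Theory Num.Theory.
Local Open Scope ring_scope.
Local Open Scope group_scope.

(* Elements of the Burnside ring B(Pi) of a finite group Pi are represented
   by their integer coefficient functions on subgroups: a : {ffun {group T} -> int},
   meaning sum_X a X [Pi/X], with support required to lie in the subgroups of Pi.
   (All groups involved here are abelian, so conjugacy classes of subgroups
   are subgroups.) *)
Definition burnside (T : finGroupType) := {ffun {group T} -> int}.

Definition in_burnside (T : finGroupType) (Pi : {set T}) (a : burnside T) : Prop :=
  forall X : {group T}, a X != 0%R -> X \subset Pi.

Definition bs (T : finGroupType) (A : {set T}) : burnside T :=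
  [ffun X : {group T} => ((X : {set T}) == A)%:Z].

(* Brauer relations K(Pi): kernel of B(Pi) -> R_Q(Pi), [Pi/X] |-> Q[Pi/X].
   Q[Pi/X] has character 'Ind[Pi, X] 1; virtual rational representations
   are determined by their characters. *)
Definition brauer (T : finGroupType) (Pi : {group T}) (a : burnside T) : Prop :=
  in_burnside Pi a /\
  (\sum_(X : {group T} | X \subset Pi) (a X)%:~R *: ('Ind[Pi, X] 1 : 'CF(Pi)))%R = 0%R.

(* f : gT -> cT represents a homomorphism K -> C (canonically extended by 1 outside K) *)
Definition hom_to (gT cT : finGroupType) (K : {set gT}) (C : {set cT}) (f : {ffun gT -> cT}) : bool :=
  [&& [forall x in K, forall y in K, f (x * y) == f x * f y],
      [forall x in K, f x \in C] &
      [forall x in ~: K, f x == 1]].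

Definition graph (gT cT : finGroupType) (K : {set gT}) (f : {ffun gT -> cT}) : {set (gT * cT)%type} :=
  [set (x, f x) | x in K].

Definition is_graph (gT cT : finGroupType) (G : {set gT}) (C : {set cT}) (X : {set (gT * cT)%type}) : bool :=
  [exists K : {group gT}, exists f : {ffun gT -> cT},
     [&& (K : {set gT}) \subset G, hom_to K C f & X == graph K f]].

Definition in_BGC (gT cT : finGroupType) (G : {set gT}) (C : {set cT}) (a : burnside (gT * cT)%type) : Prop :=
  forall X : {group (gT * cT)%type}, a X != 0%R -> is_graph G C X.

Definition type2 (gT cT : finGroupType) (C : {group cT}) (G' L : {group gT}) : burnside (gT * cT)%type :=
  (bs (setX L [1 cT])
   - \sum_(f : {ffun gT -> cT} | hom_to G' C f && [forall x in L, f x == 1%g]) bs (graph G' f)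
   - bs (setX L C)
   + (bs (setX G' C)) *+ #|C|)%R.

(* Ind_K^Gamma Inf_{K/N}^K : sends S/N to S *)
Definition indinf (T : finGroupType) (K N : {group T}) (th : burnside (coset_of N)) : burnside T :=
  (\sum_(Y : {group coset_of N} | Y \subset (K / N)%g) (bs (coset N @*^-1 Y)) *~ th Y)%R.

Arguments indinf {T} K N th.

Definition Kprime_gen (gT cT : finGroupType) (G : {group gT}) (C : {group cT}) (x : burnside (gT * cT)%type) : Prop :=
  exists (K N : {group (gT * cT)%type}) (th : burnside (coset_of N)),
    [/\ K \subset setX G C, N <| K,
        (#|C|).-abelem (K / N)%g /\ #|(K / N)%g| = (#|C| ^ 3)%N,
        brauer (quotient_group K N) th &
        x = indinf K N th] /\
    (brauer (setX G C)%G x /\ in_BGC G C x).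

Inductive Kprime (gT cT : finGroupType) (G : {group gT}) (C : {group cT}) : burnside (gT * cT)%type -> Prop :=
  | Kprime0 : Kprime G C 0%R
  | KprimeStep x g (z : int) : Kprime G C x -> Kprime_gen G C g -> Kprime G C (x + g *~ z)%R.

(* Main.v *)
Require Import Defs.
From HB Require Import structures.
From mathcomp Require Import all_boot all_order all_algebra all_fingroup all_solvable all_field all_character.
From mathcomp Require Import ring.
Import GRing.Theory.

Module Part1.
Set Implicit Arguments. Unset Strict Implicit. Unset Printing Implicit Defensive.
Import GRing.Theory Num.Theory.
Local Open Scope group_scope.
Local Open Scope ring_scope.

Section KP.
Variables (gT cT : finGroupType) (G : {group gT}) (C : {group cT}).
Lemma Kprime_add x y : Kprime G C x -> Kprime G C y -> Kprime G C (x + y).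
Proof.
move=> Hx; elim=> [|y' g z _ IH Hg]; first by rewrite addr0.
by rewrite addrA; apply: KprimeStep.
Qed.
Lemma Kprime_opp x : Kprime G C x -> Kprime G C (- x).
Proof.
elim=> [|y g z _ IH Hg]; first by rewrite oppr0; exact: Kprime0.
by rewrite opprD -mulrNz; apply: KprimeStep.
Qed.
Lemma Kprime_sub x y : Kprime G C x -> Kprime G C y -> Kprime G C (x - y).
Proof. by move=> Hx Hy; apply: Kprime_add => //; apply: Kprime_opp. Qed.
Lemma Kprime_genz g z : Kprime_gen G C g -> Kprime G C (g *~ z).
Proof. by move=> Hg; rewrite -[_ *~ _]add0r; apply: KprimeStep (Kprime0 _ _) Hg. Qed.
End KP.

Definition wt (T : finGroupType) (X : {set T}) (g : T) : algC := (g \in X)%:R / #|X|%:R.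
Definition cs (T : finGroupType) (Pi : {set T}) (a : burnside T) (g : T) : algC :=
  \sum_(X : {group T} | X \subset Pi) (a X)%:~R * wt X g.

Section CS.
Variables (T : finGroupType) (Pi : {set T}) (g : T).
Lemma cs0 : cs Pi 0 g = 0.
Proof. by rewrite /cs big1 // => X _; rewrite ffunE mul0r. Qed.
Lemma csD a b : cs Pi (a + b) g = cs Pi a g + cs Pi b g.
Proof. by rewrite /cs -big_split; apply: eq_bigr => X _; rewrite ffunE intrD mulrDl. Qed.
Lemma csN a : cs Pi (- a) g = - cs Pi a g.
Proof. by rewrite /cs -sumrN; apply: eq_bigr => X _; rewrite ffunE intrN mulNr. Qed.
Lemma csB a b : cs Pi (a - b) g = cs Pi a g - cs Pi b g.
Proof. by rewrite csD csN. Qed.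
Lemma csMn a n : cs Pi (a *+ n) g = cs Pi a g *+ n.
Proof. by elim: n => [|n IH]; rewrite ?mulr0n ?cs0 // !mulrS csD IH. Qed.
Lemma cs_sum (I : finType) (P : pred I) (F : I -> burnside T) :
  cs Pi (\sum_(i | P i) F i) g = \sum_(i | P i) cs Pi (F i) g.
Proof. exact: (big_morph (fun a => cs Pi a g) csD cs0). Qed.
Lemma cs_bs (A : {group T}) : A \subset Pi -> cs Pi (bs A) g = wt A g.
Proof.
move=> sAP; rewrite /cs (bigD1 A) //= big1 ?addr0 => [|X /andP[_ nXA]].
  by rewrite ffunE eqxx mul1r.
rewrite ffunE; have -> : ((X : {set T}) == A) = false by apply/negbTE; apply: contra nXA => /eqP h; apply/eqP; apply: val_inj.
by rewrite mul0r.
Qed.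
End CS.

Lemma brauer_crit (T : finGroupType) (Pi : {group T}) (a : burnside T) :
  abelian Pi -> in_burnside Pi a -> (forall g, g \in Pi -> cs Pi a g = 0) -> brauer Pi a.
Proof.
move=> abP sa H; split=> //; apply/cfunP=> g.
case: (boolP (g \in Pi)) => gP; last by rewrite !cfun0.
rewrite sum_cfunE cfunE.
transitivity (#|Pi|%:R * cs Pi a g); last by rewrite H // mulr0.
rewrite /cs mulr_sumr.
apply: eq_bigr => X sXP; rewrite cfunE cfIndE //.
have -> : \sum_(y in Pi) (1 : 'CF(X)) (g ^ y)%g = \sum_(y in Pi) (g \in X)%:R.
  apply: eq_bigr => y yP; rewrite cfun1E.
  have cgy : (g * y = y * g)%g by exact: (centsP abP g gP y yP).
  by rewrite conjgE cgy mulKg.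
rewrite sumr_const /wt.
have hX : (#|X|%:R : algC) != 0 by rewrite pnatr_eq0 -lt0n cardG_gt0.
rewrite -mulr_natl; by field.
Qed.

End Part1.
Import Part1.

Module Part2.
Set Implicit Arguments. Unset Strict Implicit. Unset Printing Implicit Defensive.
Import GRing.Theory Num.Theory.
Local Open Scope group_scope.
Local Open Scope ring_scope.

Lemma cs_bs' (T : finGroupType) (Pi : {set T}) (g : T) (A : {set T}) (gA : group_set A) :
  A \subset Pi -> cs Pi (bs A) g = wt A g.
Proof. by move=> sAP; have := @cs_bs T Pi g (Group gA) sAP. Qed.

Section Graph.
Variables (gT cT : finGroupType).

Lemma homE (K : {set gT}) (C : {set cT}) (f : {ffun gT -> cT}) : hom_to K C f ->
  [/\ {in K &, forall x y, f (x * y)%g = (f x * f y)%g}, {in K, forall x, f x \in C} &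
      forall x, x \notin K -> f x = 1%g].
Proof.
case/and3P => /forall_inP hM /forall_inP hC /forall_inP h1; split.
- by move=> x y xK yK; apply/eqP; exact: (forall_inP (hM x xK) y yK).
- by move=> x xK; exact: hC.
- by move=> x xK; apply/eqP; apply: h1; rewrite inE.
Qed.

Lemma homI (K : {set gT}) (C : {set cT}) (f : {ffun gT -> cT}) :
  {in K &, forall x y, f (x * y)%g = (f x * f y)%g} -> {in K, forall x, f x \in C} ->
  (forall x, x \notin K -> f x = 1%g) -> hom_to K C f.
Proof.
move=> hM hC h1; apply/and3P; split.
- apply/forall_inP => x xK; apply/forall_inP => y yK; apply/eqP; exact: hM.
- by apply/forall_inP.
- apply/forall_inP => x; rewrite inE => xK; apply/eqP; exact: h1.
Qed.

Lemma hom1 (K : {group gT}) (C : {set cT}) (f : {ffun gT -> cT}) : hom_to K C f -> f 1%g = 1%g.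
Proof.
case/homE => hM _ _; have h := hM 1%g 1%g (group1 K) (group1 K).
rewrite mulg1 in h; apply: (mulgI (f 1%g)); by rewrite mulg1 -h.
Qed.

Lemma hom_pow (K : {group gT}) (C : {set cT}) (f : {ffun gT -> cT}) x k : hom_to K C f -> x \in K ->
  f (x ^+ k)%g = (f x ^+ k)%g.
Proof.
move=> hf xK; elim: k => [|k IH]; first by rewrite !expg0 (hom1 hf).
have [hM _ _] := homE hf.
by rewrite !expgS hM ?groupX // IH.
Qed.

Lemma graph_group_set (K : {group gT}) (C : {set cT}) (f : {ffun gT -> cT}) : hom_to K C f -> group_set (graph K f).
Proof.
move=> hf; have [hM _ _] := homE hf; apply/group_setP; split.
  by apply/imsetP; exists 1%g => //; rewrite (hom1 hf).
move=> _ _ /imsetP[a aK ->] /imsetP[b bK ->]; apply/imsetP; exists (a * b)%g.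
  exact: groupM.
by rewrite hM.
Qed.

Lemma mem_graph (K : {set gT}) (f : {ffun gT -> cT}) x c : ((x, c) \in graph K f) = (x \in K) && (c == f x).
Proof.
apply/imsetP/andP => [[y yK [-> ->]]|[xK /eqP ->]]; first by split.
by exists x.
Qed.

Lemma card_graph (K : {set gT}) (f : {ffun gT -> cT}) : #|graph K f| = #|K|.
Proof. by rewrite card_imset // => a b /(congr1 fst). Qed.
End Graph.

Section Count.
Variables (gT cT : finGroupType) (Q L : {group gT}) (C : {group cT}) (p : nat).
Hypotheses (pr : prime p) (abQ : abelian Q) (sLQ : L \subset Q) (iQL : #|Q : L|%g = p)
  (cC : #|C| = p).
Definition hP (f : {ffun gT -> cT}) := hom_to Q C f && [forall x in L, f x == 1%g].

Let nLQ : Q \subset 'N(L) := sub_abelian_norm abQ sLQ.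
Lemma cardQL : #|(Q / L)%g| = p.
Proof. by rewrite card_quotient. Qed.

Lemma cycQL x : x \in Q -> x \notin L -> (Q / L)%g = <[coset L x]>%g.
Proof.
move=> xQ xL; apply/eqP; rewrite eq_sym eqEcard cycle_subG mem_quotient //= cardQL -orderE.
have hd : (#[coset L x]%g %| p)%N by rewrite -cardQL order_dvdG // mem_quotient.
have h1 : (1 < #[coset L x]%g)%N.
  rewrite order_gt1; apply: contra xL => /eqP; apply: coset_idr; exact: (subsetP nLQ).
by case/primeP: pr => _ /(_ _ hd) /orP[/eqP e|/eqP ->]; [rewrite e in h1 | ].
Qed.

Lemma rep x y : x \in Q -> x \notin L -> y \in Q -> exists k, (y * (x ^+ k)^-1)%g \in L.
Proof.
move=> xQ xL yQ; have: coset L y \in <[coset L x]>%g by rewrite -cycQL // mem_quotient.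
case/cycleP => k hk; exists k; apply: coset_idr.
  by rewrite groupM ?groupV ?groupX // (subsetP nLQ).
rewrite morphM ?morphV ?morphX ?groupV ?groupX ?(subsetP nLQ) //= hk mulgV.
by [].
Qed.

Lemma hPval f x y k : hP f -> x \in Q -> y \in Q -> (y * (x ^+ k)^-1)%g \in L ->
  f y = (f x ^+ k)%g.
Proof.
case/andP => hf /forall_inP h1 xQ yQ hL; have [hM _ _] := homE hf.
have -> : y = (y * (x ^+ k)^-1 * x ^+ k)%g by rewrite mulgKV.
rewrite hM ?groupX //; last exact: (subsetP sLQ _ hL).
transitivity (1 * f (x ^+ k))%g; first by congr (_ * _)%g; apply/eqP/h1.
by rewrite mul1g (hom_pow k hf).
Qed.

Lemma hom_uniq f f' x : hP f -> hP f' -> x \in Q -> x \notin L -> f x = f' x -> f = f'.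
Proof.
move=> hf hf' xQ xL e; apply/ffunP => y; case: (boolP (y \in Q)) => yQ.
  have [k hk] := rep xQ xL yQ.
  by rewrite (hPval hf xQ yQ hk) (hPval hf' xQ yQ hk) e.
have [_ _ h1] := homE (andP hf).1; have [_ _ h1'] := homE (andP hf').1.
by rewrite h1 // h1'.
Qed.

Lemma hom_exists x c : x \in Q -> x \notin L -> c \in C -> exists f, hP f && (f x == c).
Proof.
move=> xQ xL cC'.
have dvd : (#[c]%g %| #[coset L x]%g)%N by rewrite [#[coset L x]%g]orderE -cycQL // cardQL -cC order_dvdG.
pose f := [ffun y => if y \in Q then eltm dvd (coset L y) else 1%g].
have cyc y : y \in Q -> coset L y \in <[coset L x]>%g.
  by move=> yQ; rewrite -cycQL // mem_quotient.
exists f; apply/andP; split; last by rewrite ffunE xQ eltm_id.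
apply/andP; split.
  apply: homI.
  - move=> y z yQ zQ; rewrite !ffunE groupM // yQ zQ morphM ?(subsetP nLQ) //.
    by rewrite eltmM //; exact: cyc.
  - move=> y yQ; rewrite ffunE yQ; have/cycleP[k ->] := cyc y yQ.
    by rewrite eltmE groupX.
  - by move=> y /negbTE yQ; rewrite ffunE yQ.
apply/forall_inP => y yL; rewrite ffunE (subsetP sLQ) // (coset_id yL).
have e := eltmE dvd 0; rewrite !expg0 in e; by rewrite e.
Qed.

Definition cnt x c := (\sum_(f | hP f) (f x == c))%N.

Lemma cnt1 x c : x \in Q -> x \notin L -> c \in C -> cnt x c = 1%N.
Proof.
move=> xQ xL cC'; have [f0 /andP[h0 /eqP e0]] := hom_exists xQ xL cC'.
rewrite /cnt (bigD1 f0) //= e0 eqxx big1 // => f /andP[hf nf].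
case: eqP => // e; case/eqP: nf; apply: (hom_uniq hf h0 xQ xL).
by rewrite e0 e.
Qed.

Lemma hcard : (\sum_(f | hP f) 1 = p)%N.
Proof.
have [x0 x0Q x0L] : exists2 x0, x0 \in Q & x0 \notin L.
  apply/subsetPn; apply: contraL (prime_gt1 pr) => sQL.
  have e : L :=: Q by apply/eqP; rewrite eqEsubset sLQ.
  by rewrite -iQL e indexgg.
transitivity (\sum_(f | hP f) \sum_(c in C) (f x0 == c))%N.
  apply: eq_bigr => f /andP[/homE[_ hC _] _].
  rewrite (bigD1 (f x0)) ?hC //= eqxx big1 // => c /andP[_ ne].
  by rewrite eq_sym (negbTE ne).
rewrite exchange_big /= -[p]cC -sum1_card; apply: eq_bigr => c cC'; exact: cnt1.
Qed.

Lemma cntL x c : x \in L -> cnt x c = ((c == 1%g) * p)%N.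
Proof.
move=> xL; rewrite /cnt.
transitivity (\sum_(f | hP f) (c == 1%g) : nat)%N.
  apply: eq_bigr => f /andP[_ /forall_inP h1]; by rewrite (eqP (h1 x xL)) eq_sym.
case: eqP => _; first by rewrite mul1n hcard.
by rewrite big1.
Qed.

Lemma type2_crit (G : {group gT}) x c : Q \subset G -> x \in G -> c \in C ->
  cs (setX G C) (type2 C Q L) (x, c) = 0.
Proof.
move=> sQG xG cC'.
have sLG := subset_trans sLQ sQG.
rewrite /type2 !csD !csN csMn -mulr_natl cs_sum.
rewrite (cs_bs' _ (group_setX L 1%G)) ?setXS ?sub1G //.
rewrite (cs_bs' _ (group_setX L C)) ?setXS //.
rewrite (cs_bs' _ (group_setX Q C)) ?setXS //.
rewrite (eq_bigr (fun f => wt (graph Q f) (x, c))); last first.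
  move=> f /andP[hf _]; rewrite (cs_bs' _ (graph_group_set hf)) //.
  apply/subsetP => _ /imsetP[y yQ ->]; rewrite in_setX (subsetP sQG) //=.
  by have [_ hC _] := homE hf; exact: hC.
rewrite /wt !in_setX !cardsX cards1 muln1 cC.
under eq_bigr => f _ do rewrite mem_graph card_graph.
rewrite -mulr_suml.
have -> : \sum_(f | hP f) ((x \in Q) && (c == f x))%:R = (x \in Q)%:R * (cnt x c)%:R :> algC.
  rewrite /cnt natr_sum mulr_sumr; apply: eq_bigr => f _.
  by case: (x \in Q); rewrite ?mul1r ?mul0r // eq_sym.
have cQ : #|Q| = (#|L| * p)%N by rewrite -iQL Lagrange.
have hp : (p%:R : algC) != 0 by rewrite pnatr_eq0 -lt0n prime_gt0.
have hL : (#|L|%:R : algC) != 0 by rewrite pnatr_eq0 -lt0n cardG_gt0.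
rewrite cQ !natrM cC'.
case: (boolP (x \in L)) => xL.
  rewrite (subsetP sLQ) // (cntL c xL) inE /=.
  case: eqP => _ /=; rewrite ?mul1n ?mul0n; by field; rewrite ?hp ?hL.
case: (boolP (x \in Q)) => xQ /=.
  rewrite cnt1 //; by field; rewrite ?hp ?hL.
by rewrite !mul0r mulr0 !subrr addr0.
Qed.
End Count.

End Part2.
Import Part2.

Module Part3.
Set Implicit Arguments. Unset Strict Implicit. Unset Printing Implicit Defensive.
Import GRing.Theory Num.Theory.
Local Open Scope group_scope.
Local Open Scope ring_scope.

Definition supp (T : finGroupType) (a : burnside T) (Q : pred {set T}) :=
  forall X : {group T}, a X != 0 -> Q X.

Section Supp.
Variables (T : finGroupType) (Q : pred {set T}).
Lemma supp0 : supp 0 Q.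
Proof. by move=> X; rewrite ffunE eqxx. Qed.
Lemma suppD a b : supp a Q -> supp b Q -> supp (a + b) Q.
Proof.
move=> ha hb X; rewrite ffunE => h; case: (boolP (a X == 0)) => [/eqP e|]; last exact: ha.
by apply: hb; rewrite e add0r in h.
Qed.
Lemma suppN a : supp a Q -> supp (- a) Q.
Proof. by move=> ha X; rewrite ffunE oppr_eq0; exact: ha. Qed.
Lemma suppB a b : supp a Q -> supp b Q -> supp (a - b) Q.
Proof. by move=> ha hb; apply: suppD => //; apply: suppN. Qed.
Lemma suppMn a n : supp a Q -> supp (a *+ n) Q.
Proof.
move=> ha; elim: n => [|n IH]; first by rewrite mulr0n; exact: supp0.
by rewrite mulrS; apply: suppD.
Qed.
Lemma supp_sum (I : finType) (P : pred I) (F : I -> burnside T) :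
  (forall i, P i -> supp (F i) Q) -> supp (\sum_(i | P i) F i) Q.
Proof.
move=> h; apply: (big_ind (fun a => supp a Q)); [exact: supp0 | exact: suppD | exact: h].
Qed.
Lemma supp_bs (A : {set T}) : Q A -> supp (bs A) Q.
Proof.
move=> hA X; rewrite ffunE; case: ((X : {set T}) =P A) => [e _|]; first by rewrite e.
by rewrite eqxx.
Qed.
End Supp.

Lemma setX_abelian (gT cT : finGroupType) (A : {group gT}) (B : {group cT}) :
  abelian A -> abelian B -> abelian (setX A B).
Proof.
move=> aA aB; apply/centsP => [[a b]] /setXP[aA' bB] [c d] /setXP[cA dB].
rewrite /commute /=; congr pair.
- exact: (centsP aA a aA' c cA).
- exact: (centsP aB b bB d dB).
Qed.

Lemma pair_expg (gT cT : finGroupType) (a : gT) (c : cT) n : ((a, c) ^+ n)%g = ((a ^+ n)%g, (c ^+ n)%g).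
Proof. by elim: n => [|n IH]; rewrite ?expg0 // !expgS IH. Qed.

Lemma pow_index (gT : finGroupType) (P H : {group gT}) (p : nat) a :
  abelian P -> H \subset P -> #|P : H|%g = p -> a \in P -> (a ^+ p)%g \in H.
Proof.
move=> aP sHP iPH aP'; have nHP := sub_abelian_norm aP sHP.
apply: coset_idr; first by rewrite groupX // (subsetP nHP).
by rewrite morphX ?(subsetP nHP) // -iPH -card_quotient // expg_cardG // mem_quotient.
Qed.

Section Graphs.
Variables (gT cT : finGroupType) (G : {group gT}) (C : {group cT}).

Lemma graph1 (L : {set gT}) : graph L [ffun _ => 1%g : cT] = setX L [1 cT]%g.
Proof.
apply/setP => [[a c]]; rewrite mem_graph in_setX ffunE.
by congr (_ && _); rewrite inE.
Qed.

Lemma hom_one (L : {group gT}) : hom_to L C [ffun _ => 1%g].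
Proof. by apply: homI => [x y _ _|x _|x _]; rewrite !ffunE ?mulg1. Qed.

Lemma is_graphI (K : {group gT}) f X : K \subset G -> hom_to K C f -> X = graph K f -> is_graph G C X.
Proof.
move=> sKG hf ->; apply/existsP; exists K; apply/existsP; exists f.
by rewrite sKG hf eqxx.
Qed.

Lemma type2_ng (Q L : {group gT}) (X : {group (gT * cT)%type}) :
  ~~ is_graph G C X -> Q \subset G -> L \subset Q ->
  type2 C Q L X = (bs (setX Q C) X) *+ #|C| - bs (setX L C) X.
Proof.
move=> ng sQG sLQ.
have h1 : ((X : {set _}) == setX L [1 cT]%g) = false.
  apply/negbTE; apply/negP => /eqP e; case/negP: ng.
  apply: (is_graphI (K := L) (f := [ffun _ => 1%g])); first exact: subset_trans sLQ sQG.
    exact: hom_one.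
  by rewrite graph1 e.
rewrite /type2 !ffunE sum_ffunE h1 big1; last first.
  move=> f /andP[hf _]; rewrite ffunE; case: eqP => // e; case/negP: ng.
  exact: (is_graphI sQG hf e).
rewrite ffunMnE !ffunE /=.
ring.
Qed.
End Graphs.

Section Reindex.
Variables (T : finGroupType) (K N : {group T}).
Hypothesis nNK : N <| K.

Lemma pre_props (Y : {group coset_of N}) : Y \subset (K / N)%g ->
  [/\ N \subset coset N @*^-1 Y, coset N @*^-1 Y \subset K &
      ((coset N @*^-1 Y) / N)%g = Y].
Proof.
move=> sYK; have nK := normal_norm nNK.
split.
- by rewrite -{1}(ker_coset N) ker_sub_pre.
- by apply: (subset_trans (morphpreS _ sYK)); rewrite quotientGK.
- by apply: morphpreK; apply: subset_trans sYK _; apply: quotientS.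
Qed.

Lemma reindex_quo (V : zmodType) (F : {group T} -> V) (Pi : {set T}) :
  K \subset Pi -> (forall X : {group T}, F X != 0 -> (N \subset X) && (X \subset K)) ->
  \sum_(Y : {group coset_of N} | Y \subset (K / N)%g) F (coset N @*^-1 Y)%G =
  \sum_(X : {group T} | X \subset Pi) F X.
Proof.
move=> sKP hF.
rewrite (bigID (fun X : {group T} => (N \subset X) && (X \subset K))) /=.
rewrite [X in _ + X]big1 ?addr0; last first.
  by move=> X /andP[_ h]; apply/eqP; apply: contraR h; exact: hF.
rewrite (eq_bigl (fun X : {group T} => (N \subset X) && (X \subset K))); last first.
  move=> X; apply/andP/idP => [[] //|h]; split=> //.
  by case/andP: h => _ h; exact: subset_trans h sKP.
rewrite (reindex_onto (fun Y : {group coset_of N} => (coset N @*^-1 Y)%G)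
                      (fun X : {group T} => (X / N)%G)); last first.
  move=> X /andP[sNX sXK]; apply: val_inj => /=.
  apply: quotientGK; exact: normalS sNX sXK nNK.
apply: eq_bigl => Y; apply/idP/idP => [sYK|].
  have [h1 h2 h3] := pre_props sYK.
  rewrite h1 h2 /=; apply/eqP; apply: val_inj; exact: h3.
case/andP => /andP[_ h2] /eqP e.
rewrite -e /=; exact: quotientS.
Qed.
End Reindex.

End Part3.
Import Part3.

Module Part4.
Set Implicit Arguments. Unset Strict Implicit. Unset Printing Implicit Defensive.
Import GRing.Theory Num.Theory.
Local Open Scope group_scope.
Local Open Scope ring_scope.

Lemma supp_type2 (gT cT : finGroupType) (C : {group cT}) (M L Q P : {group gT}) :
  M \subset L -> L \subset Q -> Q \subset P ->
  supp (type2 C Q L) (fun X => (setX M [1 cT]%g \subset X) && (X \subset setX P C)).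
Proof.
move=> sML sLQ sQP; have sLP := subset_trans sLQ sQP.
rewrite /type2; apply: suppD; first apply: suppB; first apply: suppB.
- apply: supp_bs; apply/andP; split; apply: setXS; rewrite ?sub1G ?subxx //; exact: subset_trans sML _.
- apply: supp_sum => f /andP[hf /forall_inP h1]; apply: supp_bs; apply/andP; split.
    apply/subsetP => [[m c]] /setXP[mM]; rewrite inE => /eqP ->.
    by rewrite mem_graph (subsetP sLQ) ?(subsetP sML) //= eq_sym h1 // (subsetP sML).
  apply/subsetP => _ /imsetP[y yQ ->]; rewrite in_setX (subsetP sQP) //=.
  by have [_ hC _] := homE hf; exact: hC.
- apply: supp_bs; apply/andP; split; apply: setXS; rewrite ?sub1G ?subxx //; exact: subset_trans sML _.
- apply: suppMn; apply: supp_bs; apply/andP; split; apply: setXS; rewrite ?sub1G ?subxx //; exact: subset_trans sML _.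
Qed.

Section Elem.
Variables (gT cT : finGroupType) (G : {group gT}) (C : {group cT}) (p : nat).
Variables (P A A' : {group gT}).
Hypotheses (pr : prime p) (abG : abelian G) (sPG : P \subset G) (sAP : A \subset P)
  (sA'P : A' \subset P) (iPA : #|P : A|%g = p) (iPA' : #|P : A'|%g = p) (neA : A != A')
  (cC : #|C| = p).

Let M := (A :&: A')%G.
Let abP : abelian P := abelianS sPG abG.
Let p_gt0 : (0 < p)%N := prime_gt0 pr.

Lemma elem_cards : #|A| = (p * #|M|)%N /\ #|A'| = (p * #|M|)%N.
Proof.
have cAA' : commute A A'.
  apply: centC; apply: subset_trans sAP _; apply: subset_trans abP _; exact: centS.
pose H := (A <*> A')%G.
have sAH : A \subset H := joing_subl _ _.
have sHP : H \subset P by rewrite join_subG sAP.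
have cPA : #|P| = (#|A| * p)%N by rewrite -iPA Lagrange.
have cPA' : #|P| = (#|A'| * p)%N by rewrite -iPA' Lagrange.
have eHP : (H : {set gT}) = P.
  have e := Lagrange_index sHP sAH; rewrite iPA in e.
  have hd : (#|P : H|%g %| p)%N by rewrite -e dvdn_mulr.
  case/primeP: pr => _ /(_ _ hd) /orP[/eqP h1|/eqP hp].
  by rewrite (index1g sHP h1).
  rewrite hp -{2}[p]muln1 in e; move/eqP: e; rewrite eqn_pmul2l // => /eqP h.
  have eAH := index1g sAH h.
  have sA'A : A' \subset A by rewrite eAH joing_subr.
  have : A' :==: A by rewrite eqEcard sA'A /= -(leq_pmul2r p_gt0) -cPA -cPA'.
  move/eqP => e'; case/eqP: neA; apply: val_inj; by rewrite /= e'.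
have mc := mul_cardG A A'; rewrite -comm_joingE // -/H eHP in mc.
have eA' : #|A'| = (p * #|M|)%N.
  apply/eqP; rewrite -(eqn_pmul2l (cardG_gt0 A)) mc cPA mulnA.
  done.
split=> //.
apply/eqP; rewrite -(eqn_pmul2r (cardG_gt0 A')) mc cPA' [(_ * p)%N]mulnC -mulnA mulnC.
apply/eqP; rewrite /M /=; ring.
Qed.

Lemma iAM : #|A : M|%g = p.
Proof.
have := Lagrange (subsetIl A A'); rewrite (proj1 elem_cards) mulnC => /eqP.
by rewrite eqn_pmul2r ?cardG_gt0 // => /eqP.
Qed.
Lemma iA'M : #|A' : M|%g = p.
Proof.
have := Lagrange (subsetIr A A'); rewrite (proj2 elem_cards) mulnC => /eqP.
by rewrite eqn_pmul2r ?cardG_gt0 // => /eqP.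
Qed.

Definition Eel := type2 C P A *+ p + type2 C A M - (type2 C P A' *+ p + type2 C A' M).
Let Qd := fun X : {set (gT * cT)} => (setX M [1 cT]%g \subset X) && (X \subset setX P C).

Lemma Eel_supp : supp Eel Qd.
Proof.
apply: suppB; apply: suppD; try apply: suppMn; apply: supp_type2 => //;
  by rewrite ?subsetIl ?subsetIr ?subxx // (subset_trans (subsetIl _ _)).
Qed.

Lemma Eel_ng (X : {group (gT * cT)}) : ~~ is_graph G C X -> Eel X = 0.
Proof.
move=> ng; have sAG := subset_trans sAP sPG; have sA'G := subset_trans sA'P sPG.
have ev (a b c d : burnside (gT * cT)%type) :
  (a *+ p + b - (c *+ p + d)) X = a X *+ p + b X - (c X *+ p + d X).
  by rewrite !ffunE !ffunMnE.
rewrite /Eel ev !(type2_ng ng) ?subsetIl ?subsetIr //.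
rewrite cC; ring.
Qed.

Lemma Eel_crit x c : x \in G -> c \in C -> cs (setX G C) Eel (x, c) = 0.
Proof.
move=> xG cC'; have sAG := subset_trans sAP sPG; have sA'G := subset_trans sA'P sPG.
have abA : abelian A := abelianS sAP abP.
have abA' : abelian A' := abelianS sA'P abP.
have ev (a b c' d : burnside (gT * cT)%type) :
  cs (setX G C) (a *+ p + b - (c' *+ p + d)) (x, c) =
  cs (setX G C) a (x, c) *+ p + cs (setX G C) b (x, c) -
  (cs (setX G C) c' (x, c) *+ p + cs (setX G C) d (x, c)).
  by rewrite csB !csD !csMn.
rewrite /Eel ev.
rewrite (type2_crit pr abP sAP iPA cC sPG xG cC').
rewrite (type2_crit pr abA (subsetIl _ _) iAM cC sAG xG cC').
rewrite (type2_crit pr abP sA'P iPA' cC sPG xG cC').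
rewrite (type2_crit pr abA' (subsetIr _ _) iA'M cC sA'G xG cC').
by rewrite mul0rn !addr0 subrr.
Qed.

Let abC : abelian C.
Proof. by apply: cyclic_abelian; apply: prime_cyclic; rewrite cC. Qed.

Lemma Eel_gamma : brauer (setX G C)%G Eel.
Proof.
apply: brauer_crit.
- exact: setX_abelian.
- move=> X /Eel_supp /andP[_ h]; apply: subset_trans h _; exact: setXS sPG (subxx _).
- move=> [x c] /setXP[xG cC']; exact: Eel_crit.
Qed.

Lemma Eel_BGC : in_BGC G C Eel.
Proof. by move=> X nz; apply: (contraR _ nz) => ng; rewrite Eel_ng ?eqxx. Qed.

Lemma Eel_gen : Kprime_gen G C Eel.
Proof.
pose K := setX_group P C; pose N := setX_group M [1 cT]%G.
have abK : abelian K := setX_abelian abP abC.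
have sNK : N \subset K.
  by apply: setXS; [exact: subset_trans (subsetIl _ _) sAP | exact: sub1G].
have nNK : N <| K by rewrite -sub_abelian_normal.
have sKG : K \subset setX G C by apply: setXS.
have suppE : forall X : {group (gT * cT)%type}, Eel X != 0 -> (N \subset X) && (X \subset K).
  exact: Eel_supp.
pose th := [ffun Y : {group coset_of N} =>
  if Y \subset (K / N)%g then Eel (coset N @*^-1 Y)%G else 0].
exists K, N, th; split; last by split; [exact: Eel_gamma | exact: Eel_BGC].
split=> //.
- split.
  + rewrite cC; apply/(abelemP pr); split; first exact: quotient_abelian.
    move=> _ /morphimP[k kN kK ->]; rewrite -morphX //; apply: coset_id.
    case: k kN kK => a c _ /setXP[aP cC']; rewrite pair_expg in_setX.
    apply/andP; split.
      by rewrite inE (pow_index abP sAP iPA aP) (pow_index abP sA'P iPA' aP).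
    by rewrite inE -cC expg_cardG.
  + rewrite card_quotient ?normal_norm // cC.
    have e := Lagrange sNK.
    have cN : #|N| = #|M| by rewrite /N /= cardsX cards1 muln1.
    have cK : #|K| = (#|M| * (p * p * p))%N.
      rewrite /K /= cardsX cC -(Lagrange sAP) iPA (proj1 elem_cards).
      by rewrite !mulnA [(p * #|M|)%N]mulnC.
    rewrite cN cK in e; apply/eqP; rewrite -(eqn_pmul2l (cardG_gt0 M)) e.
    by rewrite (_ : (p ^ 3 = p * p * p)%N) // !expnS expn0 muln1 mulnA.
- apply: brauer_crit.
  + exact: quotient_abelian.
  + by move=> Y; rewrite ffunE; case: ifP => // _; rewrite eqxx.
  + move=> _ /morphimP[[x c] yN yK ->].
    have /setXP[xG cC'] := subsetP sKG _ yK.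
    pose F' := fun X : {group (gT * cT)%type} => (Eel X)%:~R * wt X (x, c) * #|N|%:R.
    transitivity (\sum_(Y : {group coset_of N} | Y \subset (K / N)%g)
       F' (coset N @*^-1 Y)%G).
      apply: eq_bigr => Y sY; rewrite /F' ffunE sY /wt.
      have sYN : Y \subset (coset N @* 'N(N))%g.
        by apply: subset_trans sY _; apply: quotientS; exact: normal_norm.
      rewrite /= (card_morphpre sYN) ker_coset.
      have -> : ((x, c) \in coset N @*^-1 Y) = (coset N (x, c) \in Y).
        by rewrite morphpreE in_setI yN /= inE.
      have hN : (#|N|%:R : algC) != 0 by rewrite pnatr_eq0 -lt0n cardG_gt0.
      have hY : (#|Y|%:R : algC) != 0 by rewrite pnatr_eq0 -lt0n cardG_gt0.
      rewrite natrM; field; by rewrite hN hY.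
    rewrite (reindex_quo nNK (F := F') (Pi := setX G C)) //; last first.
      move=> X; rewrite /F'; case: (Eel X =P 0) => [-> | /eqP nz _]; last exact: suppE.
      by rewrite mul0r mul0r eqxx.
    rewrite /F' -mulr_suml; have := Eel_crit xG cC'; rewrite /cs => ->.
    by rewrite mul0r.
- apply/ffunP => X; rewrite /indinf sum_ffunE; symmetry.
  pose F' := fun X' : {group (gT * cT)%type} =>
        if (X : {set _}) == X' then Eel X' else 0.
  transitivity (\sum_(Y : {group coset_of N} | Y \subset (K / N)%g) F' (coset N @*^-1 Y)%G).
    apply: eq_bigr => Y sY; rewrite ffunMzE.
    have -> : th Y = Eel (coset N @*^-1 Y)%G by rewrite /th ffunE sY.
    rewrite [bs _ X]ffunE /F' /=.
    by case: eqP => _; rewrite ?intz ?mul0rz.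
  rewrite (reindex_quo nNK (F := F') (Pi := setX G C)) //; last first.
    by move=> X'; rewrite /F'; case: ((X : {set _}) =P X') => // _; exact: suppE.
  rewrite /F'; case: (boolP (X \subset setX G C)) => sX.
    rewrite (bigD1 X) //= eqxx big1 ?addr0 // => X' /andP[_ ne].
    case: eqP => // e; case/eqP: ne; apply: val_inj; by rewrite /= e.
  rewrite big1; last first.
    by move=> X' sX'; case: eqP => // e; case/negP: sX; rewrite e.
  case: (Eel X =P 0) => // /eqP /suppE /andP[_ h]; case/negP: sX.
  exact: subset_trans h sKG.
Qed.

End Elem.

End Part4.
Import Part4.

Module Part5.
Set Implicit Arguments. Unset Strict Implicit. Unset Printing Implicit Defensive.
Import GRing.Theory Num.Theory.
Local Open Scope group_scope.

Section Chains.
Variables (gT : finGroupType) (p : nat).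
Hypothesis pr : prime p.

Definition chain (c : nat -> {group gT}) (e : nat) :=
  forall j, 0 < j <= e -> c j \subset c j.-1 /\ #|c j.-1 : c j| = p.

Lemma chain_sub c e i j : chain c e -> i <= j -> j <= e -> c j \subset c i.
Proof.
move=> ch; elim: j => [|j IH] hij hje.
  by rewrite leqn0 in hij; rewrite (eqP hij).
case: (ltngtP i j.+1) => [lt|gt|->] //.
  have hj : 0 < j.+1 <= e by rewrite ltn0Sn hje.
  apply: subset_trans (ch _ hj).1 (IH _ _); first by rewrite ltnS in lt.
  exact: ltnW.
by move: hij; rewrite leqNgt gt.
Qed.

Lemma chain_index c e k : chain c e -> k <= e -> #|c 0 : c k| = (p ^ k)%N.
Proof.
move=> ch; elim: k => [|k IH] hk; first by rewrite indexgg.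
have hk1 : 0 < k.+1 <= e by rewrite ltn0Sn hk.
have [s i] := ch k.+1 hk1.
rewrite -(Lagrange_index (chain_sub ch (leq0n k) (ltnW hk)) s) IH ?(ltnW hk) //=.
by rewrite i expnS mulnC.
Qed.

Lemma chain_shift c e : chain c e.+1 -> chain (fun j => c j.+1) e.
Proof.
move=> ch j /andP[j0 je]; have hj : 0 < j.+1 <= e.+1 by rewrite ltn0Sn ltnS je.
rewrite /= prednK //; exact: ch _ hj.
Qed.

Lemma exists_chain k : forall (M L : {group gT}), p.-group M -> L \subset M ->
  #|M : L| = (p ^ k)%N ->
  exists c : nat -> {group gT}, [/\ c 0 = M, c k = L & chain c k].
Proof.
elim: k => [|k IH] M L pM sLM iML.
  exists (fun _ => M); split=> //; last by move=> j; rewrite leqn0 andbC; case: eqP => // ->.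
  by apply/val_inj; rewrite /= (index1g sLM iML).
have pLM : L \proper M.
  rewrite properEneq sLM andbT; apply/eqP => e; move: iML; rewrite e indexgg => /eqP.
  by rewrite eq_sym -(expn0 p) eqn_exp2l ?prime_gt1.
pose gP := fun H : {group gT} => (L \subset H) && (H \proper M).
have gPL : gP L by rewrite /gP subxx pLM.
have [H maxH sLH] := @maxgroup_exists _ gP L gPL.
have [/andP[_ pHM] mH] := maxgroupP maxH.
have mx : maximal H M.
  apply/maxgroupP; split=> // H' pH' sHH'; apply: mH => //.
  by rewrite /gP pH' (subset_trans sLH sHH').
have iMH := p_maximal_index pM mx.
have sHM := proper_sub pHM.
have iHL : #|H : L| = (p ^ k)%N.
  have := Lagrange_index sHM sLH; rewrite iMH iML expnS => /eqP.
  by rewrite eqn_pmul2l ?prime_gt0 // => /eqP.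
have [c' [c0 ck chc]] := IH H L (pgroupS sHM pM) sLH iHL.
exists (fun j => if j is j'.+1 then c' j' else M); split=> //.
move=> [|[|j]] hj //.
  by rewrite /= c0 sHM iMH.
have hj' : 0 < j.+1 <= k by case/andP: hj.
exact: chc _ hj'.
Qed.
End Chains.

Definition Ssum (gT cT : finGroupType) (C : {group cT}) (p : nat) (c : nat -> {group gT}) (e : nat) :=
  (\sum_(1 <= j < e.+1) (type2 C (c j.-1) (c j)) *+ (p ^ (e - j)))%R.

Lemma Ssum0 (gT cT : finGroupType) (C : {group cT}) p (c : nat -> {group gT}) : Ssum C p c 0 = 0%R.
Proof. by rewrite /Ssum big_geq. Qed.

Lemma SsumS (gT cT : finGroupType) (C : {group cT}) p (c : nat -> {group gT}) e :
  Ssum C p c e.+1 = (type2 C (c 0) (c 1) *+ p ^ e + Ssum C p (fun j => c j.+1) e)%R.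
Proof.
rewrite /Ssum big_nat_recl // subSS subn0; congr (_ + _)%R.
apply: eq_big_nat => j /andP[j1 _] /=; by rewrite prednK // subSS.
Qed.

End Part5.
Import Part5.

Module Part6.
Set Implicit Arguments. Unset Strict Implicit. Unset Printing Implicit Defensive.
Import GRing.Theory Num.Theory.

Lemma zchain (V : zmodType) (a b c d : V) : (a - d = (a - b) + (b - c) + (c - d))%R.
Proof. by rewrite !addrA !subrK. Qed.

Lemma zshift (V : zmodType) (a x y : V) : ((a + x) - (a + y) = x - y)%R.
Proof. by rewrite opprD addrACA subrr add0r. Qed.

Lemma bmid (T : finGroupType) (a b c d x : burnside T) (p q : nat) :
  ((a *+ (p * q) + (b *+ q + x)) - (c *+ (p * q) + (d *+ q + x)) =
   (a *+ p + b - (c *+ p + d)) *+ q)%R.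
Proof. apply/ffunP => X; rewrite !(ffunE, ffunMnE); ring. Qed.

Section Main.
Variables (gT cT : finGroupType) (G : {group gT}) (C : {group cT}) (p : nat).
Hypotheses (pr : prime p) (abG : abelian G) (pG : p.-group%g G) (cC : #|C| = p).

Lemma main e : forall c d : nat -> {group gT}, c 0 = d 0 -> c e = d e ->
  chain p c e -> chain p d e -> c 0 \subset G ->
  Kprime G C (Ssum C p c e - Ssum C p d e)%R.
Proof.
elim: e => [|e IH] c d e0 ee chc chd sG.
  by rewrite !Ssum0 subrr; exact: Kprime0.
have same1 : forall c d : nat -> {group gT}, c 0 = d 0 -> c 1 = d 1 -> c e.+1 = d e.+1 ->
    chain p c e.+1 -> chain p d e.+1 -> c 0 \subset G ->
    Kprime G C (Ssum C p c e.+1 - Ssum C p d e.+1)%R.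
  move=> c' d' e0' e1' ee' chc' chd' sG'.
  rewrite !SsumS e0' e1' zshift; apply: IH => //=.
  - exact: chain_shift.
  - exact: chain_shift.
  - exact: subset_trans (chain_sub chc' (leq0n 1) (ltn0Sn e)) sG'.
case: (eqVneq (c 1) (d 1)) => [e1 | ne1]; first exact: same1.
move: IH same1 ee chc chd ne1; case: e => [|e] IH same1 ee chc chd ne1.
  by case/eqP: ne1.
have h1 : 0 < 1 <= e.+2 by [].
have [sAP iPA] := chc 1 h1.
have [sA'P' iPA'] := chd 1 h1.
rewrite /= -e0 in sA'P' iPA'.
set P := c 0 in sG sAP iPA sA'P' iPA' *.
set A := c 1 in sAP iPA ne1 *.
set A' := d 1 in sA'P' iPA' ne1 *.
pose M := (A :&: A')%G.
pose L := c e.+2.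
have sLA : L \subset A by apply: (chain_sub chc).
have sLA' : L \subset A' by rewrite /L ee; apply: (chain_sub chd).
have sLM : L \subset M by rewrite subsetI sLA sLA'.
have iAM' := iAM pr abG sG sAP sA'P' iPA iPA' ne1.
have sMP : M \subset P := subset_trans (subsetIl _ _) sAP.
have iPL : #|P : L|%g = (p ^ e.+2)%N by apply: (chain_index chc).
have iPM : #|P : M|%g = (p * p)%N by rewrite -(Lagrange_index sAP (subsetIl _ _)) iPA iAM'.
have iML : #|M : L|%g = (p ^ e)%N.
  have := Lagrange_index sMP sLM; rewrite iPM iPL !expnS mulnA => /eqP.
  by rewrite eqn_pmul2l ?muln_gt0 ?prime_gt0 // => /eqP.
have [b [b0 be chb]] := exists_chain pr (pgroupS (subset_trans sMP sG) pG) sLM iML.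
pose c' := fun j => match j with 0 => P | 1 => A | j'.+2 => b j' end.
pose d' := fun j => match j with 0 => P | 1 => A' | j'.+2 => b j' end.
have chc' : chain p c' e.+2.
  move=> [|[|[|j]]] hj //.
  - by rewrite /= b0 subsetIl iAM'.
  - have hj' : 0 < j.+1 <= e by case/andP: hj.
    exact: chb _ hj'.
have iA'M' : #|A' : M|%g = p by apply: (iA'M pr abG sG sAP sA'P' iPA iPA' ne1).
have chd' : chain p d' e.+2.
  move=> [|[|[|j]]] hj //.
  - by rewrite /= b0 subsetIr iA'M'.
  - have hj' : 0 < j.+1 <= e by case/andP: hj.
    exact: chb _ hj'.
rewrite (zchain _ (Ssum C p c' e.+2) (Ssum C p d' e.+2)).
apply: Kprime_add; first apply: Kprime_add.
- by apply: same1 => //=; rewrite be.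
- rewrite !SsumS /= b0 expnS bmid pmulrn.
  apply: Kprime_genz.
  exact: (Eel_gen pr abG sG sAP sA'P' iPA iPA' ne1 cC).
- by apply: same1 => //=; rewrite be -ee.
Qed.
End Main.


End Part6.
Import Part6.

Local Open Scope group_scope.

Theorem lemma7p6 (p : nat) (gT cT : finGroupType) (G : {group gT}) (C : {group cT})
    (e : nat) (Gs Hs : nat -> {group gT}) :
  prime p -> abelian G -> p.-group G -> #|C| = p ->
  Gs 0 \subset G -> Gs 0 :=: Hs 0 -> Gs e :=: Hs e ->
  (forall j, 0 < j <= e -> Gs j \subset Gs j.-1 /\ #|Gs j.-1 : Gs j| = p) ->
  (forall j, 0 < j <= e -> Hs j \subset Hs j.-1 /\ #|Hs j.-1 : Hs j| = p) ->
  Kprime G C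
    (\sum_(1 <= j < e.+1) (type2 C (Gs j.-1) (Gs j)) *+ (p ^ (e - j))
     - \sum_(1 <= j < e.+1) (type2 C (Hs j.-1) (Hs j)) *+ (p ^ (e - j)))%R.
Proof.
move=> pr abG pG cC sG e0 ee chG chH.
exact: (main pr abG pG cC (val_inj e0) (val_inj ee) chG chH sG).
Qed.
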